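(* Let $G=(V,E)$ be a rooted tree with root $t_0$, let $1\le p<\infty$, and let ${\bm\nu}=\{\nu_t\}_{t\in V}$, ${\bm\mu}=\{\mu_t\}_{t\in V}$ be two weights (positive sequences) over $V$ with $\sum_{t\in V}\nu_t<\infty$ and $\sum_{t\in V}\mu_t<\infty$. Suppose there is a constant $C$ such that for every sequence ${\bm b}=\{b_t\}_{t\in V}$, $$\Big(\sum_{t\in V}\nu_t\Big|\sum_{t_0\prec u\preceq t}b_u\Big|^p\Big)^{1/p}\le C\Big(\sum_{t\in V}\mu_t|b_t|^p\Big)^{1/p}.$$ Then there is a constant $C_P$, depending only on $C$ (and $p$), such that for every sequence ${\bm b}=\{b_t\}_{t\in V}$, $$\Big(\sum_{t\in V}|b_t-\bar b|^p\nu_t\Big)^{1/p}\le C_P\Big(\sum_{t\succ t_0}|b_t-b_{t_p}|^p\mu_t\Big)^{1/p},\qquad \bar b=\frac{\sum_{t\in V}b_t\nu_t}{\sum_{t\in V}\nu_t}.$$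
   Context: A tree is a connected graph without cycles; a rooted tree has a distinguished vertex $t_0$ (the root). The partial order $\preceq$ on $V$ is defined by $r\preceq t$ if $r$ lies on the unique path from $t$ to $t_0$; $r\prec t$ means $r\preceq t$ and $r\neq t$. For $t\neq t_0$, $t_p$ denotes the parent of $t$, i.e. the first vertex after $t$ on the path from $t$ to $t_0$. *)

(* Defs.v *)
From HB Require Import structures.
From mathcomp Require Import all_boot all_order all_algebra.
From mathcomp Require Import all_classical all_reals all_analysis.
Set Implicit Arguments. Unset Strict Implicit. Unset Printing Implicit Defensive.
Import Order.TTheory GRing.Theory Num.Theory.
Local Open Scope ring_scope.

(* A rooted tree on the vertex type V, encoded by its root, its parent map
   (t |-> t_p, with the convention parent troot = troot) and its depth map
   (graph distance to the root).  The edges of the tree are {t, parent t}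
   for t <> root. *)
Record rooted_tree (V : Type) := RootedTree {
  troot : V;
  parent : V -> V;
  depth : V -> nat;
  parent_root : parent troot = troot;
  depth_root : depth troot = 0%N;
  depth_parent : forall t, t <> troot -> depth t = (depth (parent t)).+1 }.

Definition tree_le (V : Type) (T : rooted_tree V) (r t : V) : Prop :=
  exists n : nat, iter n (parent T) t = r.

(* sum_{t0 ≺ u ⪯ t} b_u : the vertices u with root ≺ u ⪯ t are exactly
   t, t_p, (t_p)_p, ... (depth t of them, the root excluded). *)
Definition path_sum (R : realType) (V : Type) (T : rooted_tree V)
  (b : V -> R) (t : V) : R :=
  \sum_(k < depth T t) b (iter k (parent T) t).

Definition rsum (R : realType) (V : choiceType) (f : V -> R) : R :=
  fine (\esum_(t in [set: V]) (Num.max (f t) 0)%:E)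
  - fine (\esum_(t in [set: V]) (Num.max (- f t) 0)%:E).

(* Main.v *)
Require Import Defs.
From HB Require Import structures.
From mathcomp Require Import all_boot all_order all_algebra.
From mathcomp Require Import all_classical all_reals all_analysis.
From mathcomp Require Import lra ring.
Set Implicit Arguments. Unset Strict Implicit.
Import Order.TTheory GRing.Theory Num.Theory.
Local Open Scope ring_scope.

Section Tool.
Variables (R : realType) (V : choiceType).
Implicit Types (f g : V -> R).

Local Notation S f := (\esum_(t in [set: V]) (f t)%:E)%E.

Lemma esumZ f k : 0 <= k -> (forall t, 0 <= f t) ->
  (\esum_(t in [set: V]) (k * f t)%:E = k%:E * S f)%E.
Proof.
move=> k0 f0.
rewrite /esum -ereal_supZl//; last first.
  by apply/set0P; exists 0%E; exists set0; [exact: fsets_set0|rewrite fsbig_set0].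
congr ereal_sup; apply/seteqP; split=> x /=.
  move=> [A HA <-]; exists (\sum_(i \in A) (f i)%:E)%E; first by exists A.
  by rewrite ge0_mule_fsumr//; apply: eq_fsbigr => i _; rewrite EFinM.
move=> [y [A HA <-] <-]; exists A => //.
by rewrite ge0_mule_fsumr//; apply: eq_fsbigr => i _; rewrite EFinM.
Qed.

Lemma esum_ge0' f : (forall t, 0 <= f t) -> (0 <= S f)%E.
Proof. by move=> f0; apply: esum_ge0 => t _; rewrite lee_fin. Qed.

Definition summ f := (S (fun t => `|f t|) < +oo)%E.

Lemma rsum_ge0E f : (forall t, 0 <= f t) -> rsum f = fine (S f).
Proof.
move=> f0; rewrite /rsum (esum1 (a := fun t => (Num.max (- f t) 0)%:E)); last first.
  by move=> t _; congr EFin; apply/max_idPr; rewrite oppr_le0.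
rewrite subr0; congr fine; apply: eq_esum => t _; congr EFin; exact/max_idPl.
Qed.

Lemma summ_fin f : (forall t, 0 <= f t) -> summ f -> S f = (fine (S f))%:E.
Proof.
move=> f0 sf; rewrite fineK// fin_numElt (lt_le_trans (ltNyr 0)) ?esum_ge0'//=.
by apply: le_lt_trans sf; apply: le_esum => t _; rewrite lee_fin ler_norm.
Qed.


Lemma summ_le f g : (forall t, `|f t| <= `|g t|) -> summ g -> summ f.
Proof. move=> h; apply: le_lt_trans; apply: le_esum => t _; rewrite lee_fin; exact: h. Qed.

Lemma summD f g : summ f -> summ g -> summ (fun t => f t + g t).
Proof.
move=> sf sg; rewrite /summ; apply: le_lt_trans (lte_add_pinfty sf sg).
rewrite -esumD; last 2 first.
- by move=> t _; rewrite lee_fin.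
- by move=> t _; rewrite lee_fin.
by apply: le_esum => t _; rewrite lee_fin ler_normD.
Qed.

Lemma summZ f k : summ f -> summ (fun t => k * f t).
Proof.
move=> sf; rewrite /summ (eq_esum (b := fun t => (`|k| * `|f t|)%:E)); last first.
  by move=> t _; rewrite normrM.
by rewrite esumZ// lte_mul_pinfty.
Qed.

Let posp f t := Num.max (f t) 0.
Let negp f t := Num.max (- f t) 0.

Lemma posp_ge0 f t : 0 <= posp f t. Proof. by rewrite /posp le_max lexx orbT. Qed.
Lemma negp_ge0 f t : 0 <= negp f t. Proof. by rewrite /negp le_max lexx orbT. Qed.
Lemma posp_le f t : `|posp f t| <= `|f t|.
Proof. rewrite ger0_norm ?posp_ge0// /posp ge_max normr_ge0 andbT; exact: ler_norm. Qed.
Lemma negp_le f t : `|negp f t| <= `|f t|.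
Proof. rewrite ger0_norm ?negp_ge0// /negp ge_max normr_ge0 andbT -normrN; exact: ler_norm. Qed.
Lemma posnegE f t : f t = posp f t - negp f t.
Proof. rewrite /posp /negp; case: (leP 0 (f t)) => h.
  by rewrite (max_idPr _) ?subr0 // oppr_le0.
rewrite (max_idPl _); first by rewrite sub0r opprK.
by rewrite oppr_ge0 ltW.
Qed.

Lemma rsumE f : rsum f = fine (S (posp f)) - fine (S (negp f)).
Proof. by []. Qed.

Lemma fine_esumD f g : (forall t, 0 <= f t) -> (forall t, 0 <= g t) -> summ f -> summ g ->
  fine (S (fun t => f t + g t)) = fine (S f) + fine (S g).
Proof.
move=> f0 g0 sf sg.
rewrite (eq_esum (b := fun t => (f t)%:E + (g t)%:E)%E) //.
rewrite esumD; last 2 first.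
- by move=> t _; rewrite lee_fin.
- by move=> t _; rewrite lee_fin.
by rewrite (summ_fin f0 sf) (summ_fin g0 sg).
Qed.

Lemma summ_ge0_fin f : (forall t, 0 <= f t) -> summ f -> fine (S f) = fine (S f) /\ S f \is a fin_num.
Proof. by move=> f0 sf; split=> //; rewrite (summ_fin f0 sf). Qed.


Lemma rsumD f g : summ f -> summ g -> rsum (fun t => f t + g t) = rsum f + rsum g.
Proof.
move=> sf sg; set h := fun t => f t + g t.
have sh : summ h by exact: summD.
have key : forall t, posp h t + negp f t + negp g t = negp h t + posp f t + posp g t.
  move=> t; have := posnegE h t; have := posnegE f t; have := posnegE g t.
  rewrite /h => e1 e2 e3; lra.
have E : S (fun t => posp h t + negp f t + negp g t) = S (fun t => negp h t + posp f t + posp g t).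
  by apply: eq_esum => t _; rewrite key.
have sp : forall k, summ k -> summ (posp k) by move=> k sk; apply: summ_le sk => t; exact: posp_le.
have sn : forall k, summ k -> summ (negp k) by move=> k sk; apply: summ_le sk => t; exact: negp_le.
have p0 : forall k t, 0 <= posp k t by move=> k t; exact: posp_ge0.
have n0 : forall k t, 0 <= negp k t by move=> k t; exact: negp_ge0.
have := congr1 fine E.
rewrite (fine_esumD (fun t => addr_ge0 (p0 h t) (n0 f t)) (n0 g) (summD (sp _ sh) (sn _ sf)) (sn _ sg)).
rewrite (fine_esumD (p0 h) (n0 f) (sp _ sh) (sn _ sf)).
rewrite (fine_esumD (fun t => addr_ge0 (n0 h t) (p0 f t)) (p0 g) (summD (sn _ sh) (sp _ sf)) (sp _ sg)).
rewrite (fine_esumD (n0 h) (p0 f) (sn _ sh) (sp _ sf)).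
rewrite !rsumE => e; lra.
Qed.

Lemma rsumN f : rsum (fun t => - f t) = - rsum f.
Proof.
rewrite !rsumE.
rewrite (eq_esum (b := fun t => (negp f t)%:E)); last by [].
rewrite (eq_esum (a := fun t => (posp (fun t => - f t) t)%:E) (b := fun t => (negp f t)%:E)) //.
rewrite (eq_esum (a := fun t => (negp (fun t => - f t) t)%:E) (b := fun t => (posp f t)%:E)); last first.
  by move=> t _; rewrite /negp /posp opprK.
lra.
Qed.

Lemma rsumZp f k : 0 <= k -> summ f -> rsum (fun t => k * f t) = k * rsum f.
Proof.
move=> k0 sf; rewrite !rsumE.
have sp : summ (posp f) by apply: summ_le sf => t; exact: posp_le.
have sn : summ (negp f) by apply: summ_le sf => t; exact: negp_le.
rewrite (eq_esum (a := fun t => (posp (fun t => k * f t) t)%:E) (b := fun t => (k * posp f t)%:E)); last first.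
  by move=> t _; rewrite /posp maxr_pMr// mulr0.
rewrite (eq_esum (a := fun t => (negp (fun t => k * f t) t)%:E) (b := fun t => (k * negp f t)%:E)); last first.
  by move=> t _; rewrite /negp maxr_pMr// mulr0 mulrN.
rewrite !esumZ//; try exact: posp_ge0; try exact: negp_ge0.
rewrite (summ_fin (@posp_ge0 f) sp) (summ_fin (@negp_ge0 f) sn) -!EFinM /=.
by rewrite mulrBr.
Qed.

Lemma rsumZ f k : summ f -> rsum (fun t => k * f t) = k * rsum f.
Proof.
move=> sf; have [k0|k0] := leP 0 k; first exact: rsumZp.
have -> : (fun t => k * f t) = (fun t => - ((- k) * f t)).
  by apply/funext => t; rewrite mulNr opprK.
by rewrite rsumN rsumZp ?oppr_ge0 ?(ltW k0)// mulNr opprK.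
Qed.

Lemma rsum_ge0 f : (forall t, 0 <= f t) -> 0 <= rsum f.
Proof. by move=> f0; rewrite rsum_ge0E// fine_ge0// esum_ge0'. Qed.

Lemma rsum_le f g : summ f -> summ g -> (forall t, f t <= g t) -> rsum f <= rsum g.
Proof.
move=> sf sg fg.
have sgf : summ (fun t => g t - f t).
  apply: summ_le (summD sg (summZ (-1) sf)) => t; by rewrite mulN1r.
have -> : g = (fun t => f t + (g t - f t)) by apply/funext => t; rewrite addrC subrK.
rewrite rsumD// lerDl; apply: rsum_ge0 => t; rewrite subr_ge0; exact: fg.
Qed.

End Tool.

Section Pw.
Variables (R : realType) (p : R).
Hypothesis hp : 1 <= p.

Lemma P1 (x : R) : `|x| <= 1 + `|x| `^ p.
Proof.
have [h|h] := leP `|x| 1; first by rewrite (le_trans h)// lerDl powR_ge0.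
by rewrite (le_trans (le1r_powR (ltW h) hp))// lerDr.
Qed.

Lemma P2 (x y : R) : `|x - y| `^ p <= 2 `^ p * (`|x| `^ p + `|y| `^ p).
Proof.
have p0 : 0 <= p by rewrite (le_trans _ hp).
set M := Num.max `|x| `|y|.
have M0 : 0 <= M by rewrite le_max normr_ge0.
have h1 : `|x - y| <= 2 * M.
  rewrite (le_trans (ler_normB _ _))// mulr2n mulrDl mul1r lerD// ?le_max lexx ?orbT//.
have h2 : `|x - y| `^ p <= (2 * M) `^ p.
  by apply: ge0_ler_powR => //; rewrite nnegrE ?mulr_ge0.
rewrite (le_trans h2)// powRM// ler_wpM2l ?powR_ge0// /M.
by case: (leP `|x| `|y|) => _; rewrite ?lerDl ?lerDr powR_ge0.
Qed.

Lemma P3 (a x : R) : 0 < a -> x <= a + a / a `^ p * `|x| `^ p.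
Proof.
move=> a0; have q0 : 0 < a `^ p by rewrite powR_gt0.
have [h|h] := leP `|x| a.
  rewrite (le_trans (ler_norm x))// (le_trans h)// lerDl mulr_ge0 ?powR_ge0//.
  by rewrite divr_ge0 ?ltW.
have e : `|x| = a * (`|x| / a) by rewrite mulrC divfK ?gt_eqF.
have h1 : 1 <= `|x| / a by rewrite ler_pdivlMr// mul1r ltW.
have h3 : `|x| / a <= (`|x| / a) `^ p by exact: le1r_powR h1 hp.
have h4 : `|x| <= a / a `^ p * `|x| `^ p.
  have e2 : `|x| `^ p = a `^ p * (`|x| / a) `^ p.
    by rewrite -powRM ?(ltW a0) ?divr_ge0 ?(ltW a0) ?normr_ge0 // -e.
  rewrite e2 mulrA divfK ?gt_eqF// [leLHS]e; apply: ler_wpM2l h3; exact: ltW a0.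
by rewrite (le_trans (ler_norm x))// (le_trans h4)// lerDr ltW.
Qed.
End Pw.

Section Tree.
Variables (V : choiceType) (T : rooted_tree V).

Lemma depth0 x : depth T x = 0%N -> x = troot T.
Proof.
move=> h; case: (eqVneq x (troot T)) => // /eqP hx.
by have := depth_parent hx; rewrite h.
Qed.

Lemma depth_iter k t : (k <= depth T t)%N -> depth T (iter k (parent T) t) = (depth T t - k)%N.
Proof.
elim: k => [|k IH] hk; first by rewrite subn0.
rewrite iterS.
have hk' : (k <= depth T t)%N by exact: ltnW.
have hnr : iter k (parent T) t <> troot T.
  move=> e; have := IH hk'; rewrite e depth_root => /eqP; rewrite eq_sym subn_eq0 leqNgt hk //.
have := depth_parent hnr; rewrite IH // => e.
by rewrite subnS e.
Qed.

Variable (R : realType).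

Lemma path_sum_tele (b : V -> R) t :
  path_sum T (fun u => if u == troot T then 0 else b u - b (parent T u)) t = b t - b (troot T).
Proof.
rewrite /path_sum.
set f := fun u => if u == troot T then 0 else b u - b (parent T u).
suff H : forall n, (n <= depth T t)%N ->
  \sum_(k < n) f (iter k (parent T) t) = b t - b (iter n (parent T) t).
  by rewrite H // (@depth0 (iter (depth T t) (parent T) t)) // depth_iter // subnn.
elim=> [|n IH] hn; first by rewrite big_ord0 subrr.
rewrite big_ord_recr IH; last exact: ltnW.
have hnr : iter n (parent T) t != troot T.
  apply/eqP => e; have := @depth_iter n t (ltnW hn); rewrite e depth_root => /eqP.
  by rewrite eq_sym subn_eq0 leqNgt hn.
have -> : f (iter n (parent T) t) = b (iter n (parent T) t) - b (iter n.+1 (parent T) t).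
  by rewrite /f (negbTE hnr) iterS.
by rewrite [LHS]/= addrA subrK.
Qed.
End Tree.

Unset Implicit Arguments. Set Strict Implicit.

Theorem lemma2p1 (R : realType) (p C : R) (hp : 1 <= p) :
  exists CP : R, 0 < CP /\
  forall (V : choiceType) (T : rooted_tree V) (nu mu : V -> R),
    (forall t, 0 < nu t) -> (forall t, 0 < mu t) ->
    (\esum_(t in [set: V]) (nu t)%:E < +oo)%E ->
    (\esum_(t in [set: V]) (mu t)%:E < +oo)%E ->
    (forall b : V -> R,
       (poweR (\esum_(t in [set: V]) (nu t * `|path_sum T b t| `^ p)%:E) p^-1
        <= C%:E * poweR (\esum_(t in [set: V]) (mu t * `|b t| `^ p)%:E) p^-1)%E) ->
    forall b : V -> R,
      let bbar := rsum (fun t => b t * nu t) / rsum nu in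
      (poweR (\esum_(t in [set: V]) (`|b t - bbar| `^ p * nu t)%:E) p^-1
       <= CP%:E * poweR (\esum_(t in [set~ troot T])
                     (`|b t - b (parent T t)| `^ p * mu t)%:E) p^-1)%E.
Proof.
have p0 : 0 < p by rewrite (lt_le_trans ltr01).
have pneq0 : p != 0 by rewrite gt_eqF.
have ip0 : 0 < p^-1 by rewrite invr_gt0.
have ipneq0 : p^-1 != 0 by rewrite gt_eqF.
set K := 2 `^ p * (1 + 2 `^ p).
have K0 : 0 < K by rewrite mulr_gt0 ?powR_gt0 ?addr_gt0.
exists (K `^ p^-1 * (`|C| + 1)); split.
  by rewrite mulr_gt0 ?powR_gt0// ltr_pwDr.
move=> V T nu mu nu0 mu0 Nfin Mfin H b; cbv zeta.
set bbar := rsum _ / rsum _.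
set r := troot T; set c := b r.
set b' := fun u => if u == r then 0 else b u - b (parent T u).
have Hb := H b'.
have E1 : \esum_(t in [set: V]) (nu t * `|path_sum T b' t| `^ p)%:E =
          \esum_(t in [set: V]) (nu t * `|b t - c| `^ p)%:E.
  by apply: eq_esum => t _; rewrite /b' /r path_sum_tele.
rewrite E1 in Hb.
set B := \esum_(t in [set~ r]) (`|b t - b (parent T t)| `^ p * mu t)%:E.
have HB : \esum_(t in [set: V]) (mu t * `|b' t| `^ p)%:E = B.
  rewrite /B [RHS]esum_mkcond; apply: eq_esum => t _.
  rewrite /b'; case: (eqVneq t r) => [->|htr].
    case: ifPn => [/set_mem hr|_]; first by exfalso; apply: hr.
    by rewrite normr0 powR0 // mulr0.
  have ht : t \in [set~ r]%classic.
    by apply/mem_set => /= e; move: htr; rewrite e eqxx.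
  by rewrite ht mulrC.
rewrite HB in Hb.
have B0 : (0 <= B)%E by apply: esum_ge0 => t _; rewrite lee_fin mulr_ge0 ?powR_ge0 ?ltW.
have [Bfin|Bnfin] := boolP (B \is a fin_num); last first.
  move/fin_numPn: Bnfin => [Bn|Bp]; first by move: B0; rewrite Bn.
  by rewrite Bp poweRyr// gt0_muley ?leey// lte_fin mulr_gt0 ?powR_gt0 ?ltr_pwDr.
have Be : B = (fine B)%:E by rewrite fineK.
set beta := fine B in Be.
have beta0 : 0 <= beta by rewrite /beta fine_ge0.
set A := \esum_(t in [set: V]) (nu t * `|b t - c| `^ p)%:E in Hb.
have A0 : (0 <= A)%E by apply: esum_ge0 => t _; rewrite lee_fin mulr_ge0 ?powR_ge0 ?ltW.
have Afin : A \is a fin_num.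
  apply/negPn/negP => /fin_numPn [An|Ap]; first by move: A0; rewrite An.
  by move: Hb; rewrite Ap Be poweRyr// poweR_EFin -EFinM leye_eq.
have Ae : A = (fine A)%:E by rewrite fineK.
set alpha := fine A in Ae.
have alpha0 : 0 <= alpha by rewrite /alpha fine_ge0.
move: Hb; rewrite Ae Be !poweR_EFin -EFinM lee_fin => Hab.
have snu : summ nu.
  by rewrite /summ (eq_esum (b := fun t => (nu t)%:E)) // => t _; rewrite ger0_norm ?ltW.
have Nf : \esum_(t in [set: V]) (nu t)%:E \is a fin_num.
  by rewrite ge0_fin_numE // esum_ge0' // => t; exact: ltW.
set N := \esum_(t in [set: V]) (nu t)%:E in Nf.
have Ne : N = (fine N)%:E by rewrite fineK.
set n := fine N in Ne.
have nge : nu r <= n.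
  have : ((nu r)%:E <= N)%E.
    apply: esum_ge; exists [set r]%classic; last by rewrite fsbig_set1.
    by split; [exact: finite_set1|].
  by rewrite Ne lee_fin.
have n0 : 0 < n by rewrite (lt_le_trans (nu0 r)).
have rnu : rsum nu = n by rewrite rsum_ge0E // => t; exact: ltW.
have sdp : summ (fun t => nu t * `|b t - c| `^ p).
  rewrite /summ (eq_esum (b := fun t => (nu t * `|b t - c| `^ p)%:E)); last first.
    by move=> t _; rewrite ger0_norm // mulr_ge0 ?powR_ge0 ?ltW.
  by rewrite -/A Ae ltry.
have sd : summ (fun t => (b t - c) * nu t).
  apply: (summ_le (g := fun t => nu t + nu t * `|b t - c| `^ p)); last exact: summD.
  move=> t; have h0 : 0 <= nu t + nu t * `|b t - c| `^ p.
    by rewrite addr_ge0 ?mulr_ge0 ?powR_ge0 ?ltW.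
  rewrite normrM (ger0_norm (ltW (nu0 t))) (ger0_norm h0).
  rewrite mulrC -{2}[nu t]mulr1 -mulrDr ler_wpM2l ?(ltW (nu0 t)) //; exact: P1.
have rb : rsum (fun t => b t * nu t) = rsum (fun t => (b t - c) * nu t) + c * n.
  have -> : (fun t => b t * nu t) = (fun t => (b t - c) * nu t + c * nu t).
    by apply/funext => t; rewrite mulrBl subrK.
  by rewrite rsumD ?rsumZ ?rnu // summZ.
set m := bbar - c.
have me : m * n = rsum (fun t => (b t - c) * nu t).
  by rewrite /m /bbar rb rnu mulrBl divfK ?gt_eqF // addrK.
have J : `|m| `^ p * n <= 2 `^ p * alpha.
  have [m0|mn0] := eqVneq m 0.
    by rewrite m0 normr0 powR0 // mul0r mulr_ge0 ?powR_ge0.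
  set a := `|m| / 2.
  have a0 : 0 < a by rewrite /a divr_gt0 ?normr_gt0.
  set s : R := if 0 <= m then 1 else -1.
  have sm : s * m = `|m|.
    rewrite /s; case: ifP => h; first by rewrite mul1r ger0_norm.
    by rewrite mulN1r ltr0_norm // ltNge h.
  have sn : `|s| = 1 by rewrite /s; case: ifP => _; rewrite ?normrN normr1.
  have pw : forall t, s * ((b t - c) * nu t) <= a * nu t + (a / a `^ p) * (nu t * `|b t - c| `^ p).
    move=> t; have := P3 hp (s * (b t - c)) a0; rewrite normrM sn mul1r => h.
    have := ler_wpM2r (ltW (nu0 t)) h => h2.
    have E : a * nu t + a / a `^ p * (nu t * `|b t - c| `^ p) = (a + a / a `^ p * `|b t - c| `^ p) * nu t by ring.
    by rewrite E mulrA.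
  have Hle := rsum_le (summZ s sd) (summD (summZ a snu) (summZ (a / a `^ p) sdp)) pw.
  rewrite rsumZ // rsumD ?summZ // !rsumZ // rnu (rsum_ge0E (f := fun t => nu t * `|b t - c| `^ p)) in Hle; last first.
    by move=> t; rewrite mulr_ge0 ?powR_ge0 ?ltW.
  rewrite -/A -/alpha -me mulrA sm in Hle.
  have em : `|m| = a + a by rewrite /a -splitr.
  rewrite em mulrDl lerD2l in Hle.
  have e2 : a / a `^ p * alpha = a * (alpha / a `^ p) by ring.
  rewrite e2 ler_pM2l // in Hle.
  have h3 : n * a `^ p <= alpha by rewrite -ler_pdivlMr ?powR_gt0.
  have em2 : `|m| = 2 * a by rewrite em mulr2n mulrDl mul1r.
  by rewrite em2 (@powRM _ 2 a p) ?(ltW a0) // -mulrA ler_wpM2l ?powR_ge0 // mulrC.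
have nn : forall t, 0 <= nu t * `|b t - c| `^ p.
  by move=> t; rewrite mulr_ge0 ?powR_ge0 ?ltW.
have Sle : (\esum_(t in [set: V]) (`|b t - bbar| `^ p * nu t)%:E <= (K * alpha)%:E)%E.
  apply: (@le_trans _ _ (\esum_(t in [set: V]) ((2 `^ p * (nu t * `|b t - c| `^ p))%:E
                                  + ((2 `^ p * `|m| `^ p) * nu t)%:E))%E).
    apply: le_esum => t _; rewrite -EFinD lee_fin.
    have e : b t - bbar = (b t - c) - m by rewrite /m; ring.
    rewrite e; have h := P2 hp (b t - c) m.
    have h2 := ler_wpM2r (ltW (nu0 t)) h.
    apply: (le_trans h2); rewrite le_eqVlt; apply/orP; left; apply/eqP; ring.
  rewrite esumD; last 2 first.
  - by move=> t _; rewrite lee_fin mulr_ge0 ?powR_ge0 ?nn.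
  - by move=> t _; rewrite lee_fin mulr_ge0 ?powR_ge0 ?mulr_ge0 ?powR_ge0 ?(ltW (nu0 t)).
  rewrite esumZ ?powR_ge0 // esumZ ?mulr_ge0 ?powR_ge0 //; last by move=> t; exact: ltW.
  rewrite -/A -/N Ae Ne -!EFinM -EFinD lee_fin.
  rewrite /K mulrDr mulr1 mulrDl lerD2l -!mulrA ler_wpM2l ?powR_ge0 //.
set S := \esum_(t in [set: V]) (`|b t - bbar| `^ p * nu t)%:E in Sle *.
have S0 : (0 <= S)%E.
  by apply: esum_ge0 => t _; rewrite lee_fin mulr_ge0 ?powR_ge0 ?ltW.
have Sf : S \is a fin_num by rewrite ge0_fin_numE // (le_lt_trans Sle) ?ltry.
have Se : S = (fine S)%:E by rewrite fineK.
set sigma := fine S in Se.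
have sigma0 : 0 <= sigma by rewrite /sigma fine_ge0.
rewrite Se poweR_EFin -EFinM lee_fin.
move: Sle; rewrite Se lee_fin => Sle.
have h1 : sigma `^ p^-1 <= (K * alpha) `^ p^-1.
  apply: ge0_ler_powR => //; [exact: ltW | by rewrite nnegrE mulr_ge0 // ltW].
apply: (le_trans h1); rewrite powRM ?(ltW K0) // -mulrA ler_wpM2l ?powR_ge0 //.
apply: (le_trans Hab); rewrite ler_wpM2r ?powR_ge0 //.
by rewrite (le_trans (ler_norm C)) // lerDl.
Qed.
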